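(* Let $\mathcal{F}$ be the class of multiplicative functions $f$ from the positive integers to the nonnegative integers such that $f(p^{k-1})\le f(p^k)$ for every prime $p$ and every integer $k\ge 1$. The set of real numbers $\delta$ for which there exists $f\in\mathcal{F}$ such that the set of $f$-practical numbers has asymptotic density $\delta$ is dense in $[0,1]$.
   Context: A function $f$ is multiplicative if $f(1)=1$ and $f(ab)=f(a)f(b)$ whenever $\gcd(a,b)=1$. For such $f$ put $S_f(n)=\sum_{d\mid n} f(d)$. A positive integer $n$ is called $f$-practical if for every positive integer $m\le S_f(n)$ there is a set $\mathcal{D}$ of (distinct) positive divisors of $n$ with $m=\sum_{d\in\mathcal{D}} f(d)$. *)

(* Defs.v *)
From HB Require Import structures.
From mathcomp Require Import all_boot all_order all_algebra.
From mathcomp Require Import boolp classical_sets reals topology normedtype sequences.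
Set Implicit Arguments. Unset Strict Implicit. Unset Printing Implicit Defensive.
Import Order.TTheory GRing.Theory Num.Theory.
Import numFieldNormedType.Exports.
Local Open Scope classical_set_scope.

(* f is multiplicative (as a function on positive integers; f 0 is irrelevant). *)
Definition multiplicative (f : nat -> nat) : Prop :=
  f 1 = 1 /\
  forall a b : nat, 0 < a -> 0 < b -> coprime a b -> f (a * b) = f a * f b.

Definition in_classF (f : nat -> nat) : Prop :=
  multiplicative f /\
  forall p k : nat, prime p -> 1 <= k -> f (p ^ (k - 1)) <= f (p ^ k).

Definition S_f (f : nat -> nat) (n : nat) : nat := \sum_(d <- divisors n) f d.

Definition f_practical (f : nat -> nat) (n : nat) : Prop :=
  0 < n /\
  forall m : nat, 1 <= m <= S_f f n ->
    exists D : seq nat, [/\ uniq D, {subset D <= divisors n} & m = \sum_(d <- D) f d].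

(* number of f-practical n with 1 <= n <= N *)
Definition count_fpractical (f : nat -> nat) (N : nat) : nat :=
  #|[set n : 'I_N.+1 | `[< f_practical f n >] ]%SET|.

Definition has_fpractical_density (R : realType) (f : nat -> nat) (delta : R) : Prop :=
  (fun N : nat => ((count_fpractical f N)%:R / N%:R : R)%R) @ \oo --> delta.

(* Main.v *)
Require Import Defs.
From HB Require Import structures.
From mathcomp Require Import all_boot all_order all_algebra.
From mathcomp Require Import boolp classical_sets reals topology normedtype sequences.
From mathcomp Require Import ring lra zify.
Import Order.TTheory GRing.Theory Num.Theory.
Import numFieldNormedType.Exports.

Set Implicit Arguments. Unset Strict Implicit. Unset Printing Implicit Defensive.

Definition fQ (Q : nat) (n : nat) : nat := 3 ^ count (fun p => ~~ (p %| Q)) (primes n).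

Lemma fQ1 Q : fQ Q 1 = 1.
Proof. by []. Qed.

Lemma fQ_gt0 Q n : 0 < fQ Q n.
Proof. by rewrite /fQ expn_gt0. Qed.

Lemma fQ_mul Q a b : 0 < a -> 0 < b -> coprime a b -> fQ Q (a * b) = fQ Q a * fQ Q b.
Proof.
move=> a0 b0 cab; rewrite /fQ -expnD -count_cat.
have /permP -> // : perm_eq (primes (a * b)) (primes a ++ primes b).
apply: uniq_perm => [||p]; first exact: primes_uniq.
  by rewrite cat_uniq !primes_uniq -coprime_has_primes // cab.
by rewrite mem_cat primesM.
Qed.

Lemma fQ_pow Q p k : 0 < k -> fQ Q (p ^ k) = fQ Q p.
Proof. by move=> k0; rewrite /fQ primesX. Qed.

Lemma fQ_prime Q p : prime p -> fQ Q p = if p %| Q then 1 else 3.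
Proof. by move=> pp; rewrite /fQ primes_prime //=; case: (p %| Q). Qed.

Lemma fQ_le3 Q p k : prime p -> fQ Q (p ^ k) <= 3.
Proof.
move=> pp; case: k => [|k]; first by rewrite expn0 fQ1.
by rewrite fQ_pow // fQ_prime //; case: (p %| Q).
Qed.

Definition complete (f : nat -> nat) (L : seq nat) :=
  forall m, m <= \sum_(d <- L) f d ->
    exists b : bitseq, size b = size L /\ m = \sum_(d <- mask b L) f d.

Lemma complete_cat f L1 L2 g c :
  complete f L1 -> complete f L2 -> (forall d, d \in L2 -> f (g d) = c * f d) ->
  c <= (\sum_(d <- L1) f d).+1 -> complete f (L1 ++ map g L2).
Proof.
move=> C1 C2 Hg Hc.
have sumL2 : forall L, {subset L <= L2} -> \sum_(d <- map g L) f d = c * \sum_(d <- L) f d.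
  move=> L sL; rewrite big_map big_distrr /=; apply: eq_big_seq => d dL.
  by rewrite Hg // sL.
move=> m; rewrite big_cat /= sumL2 // => hm.
set s := \sum_(d <- L1) f d in Hc hm; set t := \sum_(d <- L2) f d in hm.
have [x [y [xs yt ->]]] : exists x y, [/\ x <= s, y <= t & m = x + c * y].
  case: (posnP c) => [c0|cpos].
    by exists m, 0; move: hm; rewrite c0 !mul0n !addn0.
  case: (leqP t (m %/ c)) => ht.
    have : c * t <= m.
      apply: leq_trans (leq_divM m c).
      by rewrite mulnC leq_mul2r ht orbT.
    by exists (m - c * t), t; split => //; lia.
  exists (m %% c), (m %/ c); split.
  - by rewrite -ltnS; apply: leq_trans Hc; rewrite ltn_mod.
  - exact: ltnW.
  - by rewrite addnC mulnC -divn_eq.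
have [b1 [sb1 e1]] := C1 x xs; have [b2 [sb2 e2]] := C2 y yt.
exists (b1 ++ b2); split.
  by rewrite !size_cat sb1 sb2 size_map.
rewrite mask_cat // -map_mask big_cat /= sumL2 -?e1 -?e2 //.
by move=> d /mem_mask.
Qed.

Lemma complete_nil f : complete f [::].
Proof. by move=> m; rewrite big_nil leqn0 => /eqP->; exists [::]; rewrite mask0 big_nil. Qed.

Lemma complete_one f : f 1 = 1 -> complete f [:: 1].
Proof.
move=> f1 m; rewrite big_cons big_nil f1 addn0.
case: m => [|[|]]// _; [exists [:: false] | exists [:: true]]; by rewrite /= ?big_cons big_nil ?f1.
Qed.

Definition plist p b := [seq p ^ i | i <- iota 0 b.+1].
Definition stepL p b L := [seq x * y | x <- plist p b, y <- L].

Lemma stepL_rec p b L : stepL p b.+1 L = stepL p b L ++ map (muln (p ^ b.+1)) L.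
Proof.
by rewrite /stepL /plist -addn1 iotaD map_cat allpairs_cat /= add0n cats0.
Qed.

Lemma stepL0 p L : stepL p 0 L = L.
Proof. by rewrite /stepL /plist /= cats0 expn0; under eq_map do rewrite mul1n; rewrite map_id. Qed.

Lemma notdvd_of p n' e : ~~ (p %| n') -> e %| n' -> ~~ (p %| e).
Proof. by move=> pn en; apply: contra pn => pe; apply: dvdn_trans en. Qed.

Lemma complete_step Q p b n' L :
  prime p -> ~~ (p %| n') -> {in L, forall e, e %| n'} ->
  complete (fQ Q) L -> fQ Q p <= (\sum_(d <- L) fQ Q d).+1 ->
  complete (fQ Q) (stepL p b L) /\ \sum_(d <- L) fQ Q d <= \sum_(d <- stepL p b L) fQ Q d.
Proof.
move=> pp pn Ldv CL hc; elim: b => [|b [IHc IHs]]; first by rewrite stepL0.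
rewrite stepL_rec; split; last by rewrite big_cat /= (leq_trans IHs) // leq_addr.
apply: (complete_cat (c := fQ Q p)) => //; last by apply: leq_trans hc _; rewrite ltnS.
move=> e eL; have ep : 0 < e.
  by case: e eL => // /Ldv; rewrite dvd0n => /eqP n0; move: pn; rewrite n0 dvdn0.
rewrite fQ_mul ?expn_gt0 ?(prime_gt0 pp) // ?fQ_pow //.
by apply: coprimeXl; rewrite prime_coprime // (notdvd_of pn (Ldv e eL)).
Qed.

Lemma logn_pe p i e : prime p -> 0 < e -> ~~ (p %| e) -> logn p (p ^ i * e) = i.
Proof.
move=> pp e0 pe; rewrite lognM ?expn_gt0 ?(prime_gt0 pp) //.
by rewrite pfactorK // logn_coprime ?addn0 // prime_coprime.
Qed.

Lemma stepL_uniq p b n' L : prime p -> 0 < n' -> ~~ (p %| n') -> uniq L ->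
  {in L, forall e, e %| n'} -> uniq (stepL p b L).
Proof.
move=> pp n0 pn uL Ldv; apply: allpairs_uniq => //.
  by rewrite map_inj_uniq ?iota_uniq //; exact: expnI (prime_gt1 pp).
move=> [x1 y1] [x2 y2] /(@allpairsP _ _ _ _ _ _ _) [[a1 b1] [H1 y1L [-> ->]]].
move=> /(@allpairsP _ _ _ _ _ _ _) [[a2 b2] [H2 y2L [-> ->]]] /= E.
move: H1 H2 E => /= /mapP [i1 _ ->] /mapP [i2 _ ->] E.
have e1 : 0 < b1 := dvdn_gt0 n0 (Ldv _ y1L).
have e2 : 0 < b2 := dvdn_gt0 n0 (Ldv _ y2L).
have ei : i1 = i2.
  by rewrite -(logn_pe i1 pp e1 (notdvd_of pn (Ldv _ y1L))) E logn_pe // (notdvd_of pn (Ldv _ y2L)).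
move: E; rewrite ei => /eqP; rewrite eqn_pmul2l ?expn_gt0 ?(prime_gt0 pp) // => /eqP ->.
by [].
Qed.

Lemma stepL_mem p b n' L : prime p -> 0 < n' -> ~~ (p %| n') -> L =i divisors n' ->
  stepL p b L =i divisors (p ^ b * n').
Proof.
move=> pp n0 pn LE d; have N0 : 0 < p ^ b * n' by rewrite muln_gt0 expn_gt0 prime_gt0.
rewrite -dvdn_divisors //; apply/(@allpairsP _ _ _ _ _ _ _)/idP.
- move=> [[x y] [/= /mapP [i ib ->] yL ->]]; rewrite LE -dvdn_divisors // in yL.
  apply: dvdn_mul => //; apply: dvdn_exp2l; move: ib; rewrite mem_iota; lia.
- move=> dd; have d0 : 0 < d := dvdn_gt0 N0 dd.
  set i := logn p d; exists (p ^ i, d %/ p ^ i) => /=.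
  have pid : p ^ i %| d by exact: pfactor_dvdnn.
  split.
  + apply/mapP; exists i => //; rewrite mem_iota /= add0n ltnS.
    have := dvdn_leq_log p N0 dd.
    by rewrite logn_pe.
  + rewrite LE -dvdn_divisors //.
    have ne : ~~ (p %| d %/ p ^ i).
      apply/negP => pe.
      have : p ^ i.+1 %| d.
        by rewrite -(divnK pid) expnSr mulnC dvdn_pmul2r ?expn_gt0 ?(prime_gt0 pp).
      by rewrite pfactor_dvdn // ltnn.
    rewrite -(@Gauss_dvdr _ (p ^ b) n' (coprimeXr b _)); first by rewrite (dvdn_trans _ dd) // dvdn_div.  
    by rewrite coprime_sym prime_coprime.
  + by rewrite mulnC divnK.
Qed.

Lemma ndvd_div_plog p d : prime p -> 0 < d -> ~~ (p %| d %/ p ^ logn p d).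
Proof.
move=> pp d0; have pid : p ^ logn p d %| d by exact: pfactor_dvdnn.
have : logn p d <= logn p d by [].
set i := logn p d in pid *; move=> _.
apply/negP => pe.
have : p ^ i.+1 %| d.
  by rewrite -(divnK pid) expnSr mulnC dvdn_pmul2r ?expn_gt0 ?(prime_gt0 pp).
by rewrite pfactor_dvdn // /i ltnn.
Qed.

Lemma size_le_sum Q L : size L <= \sum_(d <- L) fQ Q d.
Proof. by rewrite -sum1_size; apply: leq_sum => d _; exact: fQ_gt0. Qed.

Lemma two_le_sum Q L n : uniq L -> L =i divisors n -> 1 < n -> 2 <= \sum_(d <- L) fQ Q d.
Proof.
move=> uL LE n1; apply: leq_trans (size_le_sum Q L).
have -> : 2 = size [:: 1; n] by [].
apply: uniq_leq_size; first by rewrite /= inE andbT; apply/eqP => h; move: n1; rewrite -h.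
move=> x; rewrite !inE => /orP [] /eqP ->; rewrite LE ?divisor1 //.
by apply: divisors_id; apply: ltnW.
Qed.

Lemma exists_complete Q q a r : prime q -> q %| Q -> 0 < a -> 0 < r -> ~~ (q %| r) ->
  exists L, [/\ uniq L, L =i divisors (q ^ a * r), complete (fQ Q) L
              & 2 <= \sum_(d <- L) fQ Q d].
Proof.
move=> qp qQ a0; elim/ltn_ind: r => r IH r0 qr.
have qa1 : 1 < q ^ a by rewrite -(expn0 q) ltn_exp2l ?prime_gt1.
have n1 : 1 < q ^ a * r by rewrite (leq_trans qa1) // leq_pmulr.
case: (ltngtP r 1) => [|r1|r1E].
- by rewrite ltnS leqn0 => /eqP r00; move: r0; rewrite r00.
- set p := pdiv r; have pp : prime p by rewrite pdiv_prime.
  have pr : p %| r by exact: pdiv_dvd.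
  set b := logn p r; set r' := r %/ p ^ b.
  have b0 : 0 < b by rewrite /b logn_gt0 mem_primes pp r0 pr.
  have pbr : p ^ b %| r by exact: pfactor_dvdnn.
  have rE : r = p ^ b * r' by rewrite mulnC divnK.
  have r'0 : 0 < r' by move: r0; rewrite rE muln_gt0 => /andP [].
  have r'lt : r' < r.
    rewrite [X in _ < X]rE -[X in X < _](mul1n r') ltn_pmul2r //.
    by rewrite -(expn0 p) ltn_exp2l ?prime_gt1.
  have qr' : ~~ (q %| r').
    by apply: contra qr => h; rewrite rE dvdn_mull.
  have [L' [uL' LE' CL' S']] := IH r' r'lt r'0 qr'.
  have pr' : ~~ (p %| r') by exact: ndvd_div_plog.
  have pq : p != q by apply: contraNneq qr => <-.
  have pn' : ~~ (p %| q ^ a * r').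
    rewrite Euclid_dvdM // negb_or pr' andbT.
    rewrite Euclid_dvdX // negb_and; apply/orP; left.
    by rewrite dvdn_prime2 // (negbTE pq).
  have n'0 : 0 < q ^ a * r' by rewrite muln_gt0 expn_gt0 prime_gt0.
  have Ldv : {in L', forall e, e %| q ^ a * r'} by move=> e; rewrite LE' -dvdn_divisors.
  have hc : fQ Q p <= (\sum_(d <- L') fQ Q d).+1.
    by rewrite (leq_trans (fQ_le3 Q 1 pp)) // ?expn1 // ltnS.
  have [C S] := complete_step b pp pn' Ldv CL' hc.
  exists (stepL p b L'); split.
  + exact: (stepL_uniq b pp n'0 pn' uL' Ldv).
  + by move=> d; rewrite (stepL_mem _ _ _ _ LE') // rE mulnCA.
  + exact: C.
  + exact: leq_trans S' S.
- subst r; have u1 : uniq [:: 1] by [].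
  have E1 : [:: 1] =i divisors 1 by [].
  have q1 : ~~ (q %| 1) by rewrite dvdn1; apply/eqP => h; move: qp; rewrite h.
  have Ldv : {in [:: 1], forall e, e %| 1} by move=> e; rewrite inE => /eqP ->.
  have hc : fQ Q q <= (\sum_(d <- [:: 1]) fQ Q d).+1.
    by rewrite fQ_prime // qQ big_cons big_nil.
  have [C _] := complete_step a qp q1 Ldv (complete_one (fQ1 Q)) hc.
  have U := stepL_uniq a qp (ltn0Sn 0) q1 u1 Ldv.
  have M := stepL_mem a qp (ltn0Sn 0) q1 E1.
  exists (stepL q a [:: 1]); split => //.
  by rewrite muln1 in n1 M; exact: (two_le_sum Q U M n1).
Qed.

Definition cc Q M := \sum_(n < M) coprime n Q.

Lemma cc_shift Q m : cc Q (Q + m) = totient Q + cc Q m.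
Proof.
rewrite /cc big_split_ord /= totient_count_coprime big_mkord; congr (_ + _).
  by apply: eq_bigr => i _; rewrite coprime_sym.
by apply: eq_bigr => i _; rewrite -coprime_modl modnDl coprime_modl.
Qed.

Lemma cc_periodic Q k r : cc Q (k * Q + r) = k * totient Q + cc Q r.
Proof.
elim: k => [|k IH]; first by rewrite !mul0n !add0n.
by rewrite mulSn -addnA cc_shift IH mulSn addnA.
Qed.

Lemma cc_le Q r : cc Q r <= r.
Proof.
rewrite /cc; apply: (@leq_trans (\sum_(n < r) 1)).
  by apply: leq_sum => i _; case: coprime.
by rewrite sum1_card card_ord.
Qed.

Lemma sum_eqc M (c : nat) : \sum_(i < M) (i == c :> nat) = (c < M).
Proof.
elim: M => [|M IH]; first by rewrite big_ord0.
rewrite big_ord_recr /= IH ltnS.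
by case: (ltngtP c M).
Qed.

Definition Pq Q n := (n == 1) || (0 < n) && ~~ coprime n Q.

Lemma cnt_bounds Q M :
  \sum_(n < M.+1) Pq Q n + cc Q M.+1 <= M.+2 /\
  M.+1 <= \sum_(n < M.+1) Pq Q n + cc Q M.+1 + 1.
Proof.
rewrite /cc -big_split /=; split.
  apply: (@leq_trans (\sum_(n < M.+1) (1 + (n == 1 :> nat)))).
    apply: leq_sum => i _; rewrite /Pq.
    case: (i == 1 :> nat) / eqP => [->|_] /=; first by rewrite coprime1n.
    by case: (0 < i); case: coprime.
  rewrite big_split /= sum1_card card_ord sum_eqc.
  by case: (_ < _); rewrite ?addn1 ?addn0.
have := @leq_sum 'I_M.+1 (index_enum _) xpredT
  (fun n => 1) (fun n : 'I_M.+1 => Pq Q n + coprime n Q + (n == 0 :> nat)).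
rewrite sum1_card card_ord !big_split /= sum_eqc /= => -> // i _.
rewrite /Pq; case: (i == 0 :> nat) / eqP => [->|/eqP i0] /=; first by rewrite addn1.
by move: i0; case: (nat_of_ord i) => [|k] //= _; case: coprime; case: (k.+1 == 1).
Qed.

Definition prl a b := [seq p <- iota a b | prime p].
Definition Qp a b := \prod_(p <- prl a b) p.

Lemma dvdn_in_prod (s : seq nat) p : p \in s -> p %| \prod_(i <- s) i.
Proof.
elim: s => // a s IH; rewrite inE big_cons => /orP [/eqP -> | /IH h].
  exact: dvdn_mulr.
exact: dvdn_mull.
Qed.


Lemma prod_primes_gt0 (s : seq nat) : all prime s -> 0 < \prod_(p <- s) p.
Proof.
elim: s => [|a s IH] /=; first by rewrite big_nil.
by case/andP => pa ps; rewrite big_cons muln_gt0 prime_gt0 // IH.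
Qed.

Lemma prl_prime a b : all prime (prl a b).
Proof. by apply/allP => p; rewrite mem_filter => /andP []. Qed.

Lemma Qp_gt0 a b : 0 < Qp a b.
Proof. exact: prod_primes_gt0 (prl_prime a b). Qed.

Lemma reindex_mult s Y (g : nat -> nat) : 0 < s ->
  \sum_(n < s * Y) ((s %| n) * g (n %/ s)) = \sum_(t < Y) g t.
Proof.
case: s => // k _; elim: Y => [|Y IH]; first by rewrite muln0 !big_ord0.
rewrite mulnSr big_split_ord /= IH [in RHS]big_ord_recr /=; congr (_ + _).
rewrite big_ord_recl /= addn0 dvdn_mulr // mulKn // mul1n big1 ?addn0 // => j _.
rewrite /bump /= add1n dvdn_addr ?dvdn_mulr //.
have : ~~ (k.+1 %| j.+1).
  apply/negP => /(dvdn_leq (ltn0Sn _)); rewrite ltnS leqNgt.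
  by have := ltn_ord j; rewrite /= => ->.
by move/negbTE ->.
Qed.

Lemma part_eq M Q s n : (forall p, prime p -> p <= M -> p %| Q) -> 0 < Q -> Q != 1 ->
  s < M -> s.+1 %| n -> coprime (n %/ s.+1) Q -> n`_\pi(Q) = s.+1.
Proof.
move=> hQ Q0 Q1 sM sn cop.
have n0 : 0 < n.
  case: n sn cop => // _; rewrite div0n /coprime gcd0n => /eqP Qe; by move: Q1; rewrite Qe.
have nE : n = s.+1 * (n %/ s.+1) by rewrite mulnC divnK.
have m0 : 0 < n %/ s.+1 by rewrite divn_gt0 // dvdn_leq.
rewrite nE partnM // part_pnat_id; last first.
  apply/andP; split => //; apply/allP => p; rewrite mem_primes => /and3P [pp _ pd].
  rewrite mem_primes pp Q0 /=; apply: hQ => //.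
  exact: leq_trans (dvdn_leq (ltn0Sn _) pd) sM.
rewrite part_p'nat ?muln1 //.
by rewrite -coprime_pi' // coprime_sym.
Qed.

Lemma count_main M : 1 < M ->
  \sum_(s < M) (M`! %/ s.+1) * totient (Qp 1 M) <= M`! * Qp 1 M.
Proof.
move=> M1; set Q := Qp 1 M; set L := M`!.
have Q0 : 0 < Q := Qp_gt0 1 M.
have hQ : forall p, prime p -> p <= M -> p %| Q.
  move=> p pp pM; apply: dvdn_in_prod; rewrite mem_filter pp mem_iota /=.
  by rewrite (prime_gt0 pp) /= add1n ltnS.
have Q1 : Q != 1.
  apply/negP => /eqP Qe; have := hQ 2 (erefl _) M1; rewrite Qe dvdn1.
  by [].
have E : forall s : 'I_M, (L %/ s.+1) * totient Q =
    \sum_(n < L * Q) ((s.+1 %| n) * coprime (n %/ s.+1) Q).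
  move=> s; have sL : s.+1 %| L by apply: dvdn_fact; rewrite ltn0Sn /= ltn_ord.
  have -> : L * Q = s.+1 * (L %/ s.+1 * Q) by rewrite mulnA [s.+1 * _]mulnC divnK.
  rewrite (reindex_mult _ (fun t => nat_of_bool (coprime t Q))) //.
  have := cc_periodic Q (L %/ s.+1) 0; rewrite !addn0 /cc big_ord0 addn0 => <-.
  by [].
under eq_bigr do rewrite E.
rewrite exchange_big /=.
apply: (@leq_trans (\sum_(n < L * Q) 1)); last by rewrite sum1_card card_ord.
apply: leq_sum => n _.
apply: (@leq_trans (\sum_(s < M) (s == (n`_\pi(Q)).-1 :> nat))).
  apply: leq_sum => s _.
  case sn : (s.+1 %| n); last by rewrite mul0n.
  case cp : (coprime (n %/ s.+1) Q); last by rewrite muln0.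
  by rewrite (part_eq hQ Q0 Q1 (ltn_ord s) sn cp) /= eqxx.
by rewrite sum_eqc leq_b1.
Qed.

Lemma fQ_classF Q : in_classF (fQ Q).
Proof.
split; first split; first exact: fQ1.
- by move=> a b a0 b0 cab; exact: fQ_mul.
- move=> p k pp; case: k => // k _; rewrite subSS subn0.
  case: k => [|k]; first by rewrite expn0 fQ1 expn1; exact: fQ_gt0.
  by rewrite !fQ_pow.
Qed.

Lemma fQ_ge3 Q n d : coprime n Q -> d %| n -> 1 < d -> 3 <= fQ Q d.
Proof.
move=> cnQ dn d1; set p := pdiv d.
have pp : prime p := pdiv_prime d1.
have pd : p %| d := pdiv_dvd d.
have pQ : ~~ (p %| Q).
  apply/negP => pQ; have : p %| gcdn n Q by rewrite dvdn_gcd pQ (dvdn_trans pd dn).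
  by rewrite (eqP cnQ) dvdn1 => /eqP p1; move: pp; rewrite p1.
rewrite /fQ; have : 0 < count (fun p => ~~ (p %| Q)) (primes d).
  rewrite -has_count; apply/hasP; exists p => //.
  by rewrite mem_primes pp pd andbT ltnW.
case: count => // k _; rewrite expnS.
by rewrite leq_pmulr // expn_gt0.
Qed.

Lemma divisors1 : divisors 1 = [:: 1].
Proof. by []. Qed.

Lemma fpractical_fQ Q n :
  f_practical (fQ Q) n <-> (n == 1) || (0 < n) && ~~ coprime n Q.
Proof.
split.
- move=> [n0 P]; apply/negPn/negP; rewrite negb_or n0 /= negbK => /andP [n1 cnQ].
  have n1' : 1 < n by rewrite ltn_neqAle eq_sym n1.
  have S3 : 3 <= S_f (fQ Q) n.
    rewrite /S_f (bigD1_seq n) ?divisors_id ?divisors_uniq //=.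
    exact: leq_trans (fQ_ge3 cnQ (dvdnn n) n1') (leq_addr _ _).
  have [D [uD sD E]] : exists D : seq nat, [/\ uniq D, {subset D <= divisors n} & 2 = \sum_(d <- D) fQ Q d] by apply: P; rewrite /= (leq_trans _ S3).
  case: (boolP (all (pred1 1) D)) => [/allP H | /allPn [d dD dne]].
  + have : \sum_(d <- D) fQ Q d = size D.
      rewrite -sum1_size; apply: eq_big_seq => d /H /= /eqP ->; exact: fQ1.
    rewrite -E => S2.
    have : size D <= size [:: 1].
      apply: uniq_leq_size => // d /H /= /eqP ->; exact: mem_head.
    by rewrite -S2.
  + have dn : d %| n by rewrite dvdn_divisors // sD.
    have d1 : 1 < d.
      rewrite ltn_neqAle eq_sym dne /=; exact: dvdn_gt0 n0 dn.
    have : 3 <= \sum_(d <- D) fQ Q d.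
      rewrite (bigD1_seq d) //=.
      exact: leq_trans (fQ_ge3 cnQ dn d1) (leq_addr _ _).
    by rewrite -E.
- case/orP => [/eqP -> | /andP [n0 ncop]].
    split => // m /andP [m1]; rewrite /S_f divisors1 big_cons big_nil fQ1 addn0 => m1'.
    have -> : m = 1 by apply/eqP; rewrite eqn_leq m1 m1'.
    by exists [:: 1]; split => //; rewrite big_cons big_nil fQ1.
  set g := gcdn n Q.
  have g1 : 1 < g.
    rewrite ltn_neqAle eq_sym; apply/andP; split; first exact: ncop.
    by rewrite gcdn_gt0 n0.
  set q := pdiv g; have qp : prime q := pdiv_prime g1.
  have qg : q %| g := pdiv_dvd g.
  have qn : q %| n := dvdn_trans qg (dvdn_gcdl _ _).
  have qQ : q %| Q := dvdn_trans qg (dvdn_gcdr _ _).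
  set a := logn q n; set r := n %/ q ^ a.
  have a0 : 0 < a by rewrite /a logn_gt0 mem_primes qp n0 qn.
  have nE : n = q ^ a * r by rewrite mulnC divnK // pfactor_dvdnn.
  have r0 : 0 < r by move: n0; rewrite nE muln_gt0 => /andP [].
  have qr : ~~ (q %| r) by exact: ndvd_div_plog.
  have [L [uL LE CL _]] := exists_complete qp qQ a0 r0 qr.
  split => // m /andP [m1 mS].
  have SE : S_f (fQ Q) n = \sum_(d <- L) fQ Q d.
    rewrite /S_f; apply: perm_big; apply: uniq_perm (divisors_uniq _) uL _.
    by move=> d; rewrite LE -nE.
  have := CL m; rewrite -SE => /(_ mS) [b [sb E]].
  exists (mask b L); split => //; first exact: mask_uniq.
  by move=> d /mem_mask; rewrite LE -nE.
Qed.

Local Open Scope ring_scope.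

Lemma count_fQ Q N : count_fpractical (fQ Q) N = (\sum_(n < N.+1) Pq Q n)%N.
Proof.
rewrite /count_fpractical -sum1_card big_mkcond /=; apply: eq_bigr => i _.
rewrite inE; case: asboolP => h.
  by move/fpractical_fQ: h; rewrite /Pq => ->.
by case E: (Pq Q i) => //; case: h; apply/fpractical_fQ.
Qed.

Lemma count_bound (R : realType) Q N : (0 < Q)%N ->
  `| (count_fpractical (fQ Q) N)%:R - N%:R * (1 - (totient Q)%:R / Q%:R) : R| <= (Q + 2)%:R.
Proof.
move=> Q0; rewrite count_fQ.
have [B1 B2] := cnt_bounds Q N.
set c := (\sum_(n < N.+1) Pq Q n)%N in B1 B2 *.
set C := cc Q N.+1 in B1 B2.
have NE := divn_eq N.+1 Q.
set k := (N.+1 %/ Q)%N in NE; set r := (N.+1 %% Q)%N in NE.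
have rQ : (r < Q)%N by rewrite ltn_pmod.
have CE : C = (k * totient Q + cc Q r)%N by rewrite /C NE cc_periodic.
have crr := cc_le Q r.
have phiQ : (totient Q <= Q)%N.
  rewrite totient_count_coprime; apply: (@leq_trans (\sum_(0 <= d < Q) 1)%N).
    by apply: leq_sum => i _; case: coprime.
  by rewrite big_mkord sum1_card card_ord.
have Qr : (Q%:R : R) != 0 by rewrite pnatr_eq0 -lt0n.
set t : R := (totient Q)%:R / Q%:R.
have t0 : 0 <= t by rewrite /t divr_ge0.
have t1 : t <= 1 by rewrite /t ler_pdivrMr ?ltr0n // mul1r ler_nat.
have NR : (N%:R : R) = k%:R * Q%:R + r%:R - 1.
  by apply: (@addIr _ 1); rewrite subrK -natrM -natrD -NE -addn1 natrD.
have Nt : (N%:R : R) * t = (k * totient Q)%:R + r%:R * t - t.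
  by rewrite NR /t natrM; field.
have Y0 : 0 <= r%:R * t by rewrite mulr_ge0.
have Y1 : r%:R * t <= r%:R by rewrite ler_piMr.
move: B1 B2; rewrite -(addn2 N) -(addn1 N) -!(ler_nat R) !natrD CE !natrD => B1 B2.
have cr : (cc Q r)%:R <= r%:R :> R by rewrite ler_nat.
have rq : r%:R < Q%:R :> R by rewrite ltr_nat.
rewrite mulrBr mulr1 Nt.
clearbody t c C k r; rewrite ler_norml; apply/andP; split.
move: (c%:R : R) (N%:R : R) ((k * totient Q)%:R : R) ((cc Q r)%:R : R) (r%:R : R) (Q%:R : R) (r%:R * t) B1 B2 cr rq Y0 Y1 t0 t1.
  move=> a0 b0 c0 d0 e0 f0 g0 H1 H2 H3 H4 H5 H6 H7 H8; clear -H1 H2 H3 H4 H5 H6 H7 H8; lra.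
have cr0 : 0 <= (cc Q r)%:R :> R by [].
move: (c%:R : R) (N%:R : R) ((k * totient Q)%:R : R) ((cc Q r)%:R : R) (r%:R : R) (Q%:R : R) (r%:R * t) B1 B2 cr rq Y0 Y1 t0 t1 cr0.
move=> a0 b0 c0 d0 e0 f0 g0 H1 H2 H3 H4 H5 H6 H7 H8 H9; clear -H1 H2 H3 H4 H5 H6 H7 H8 H9; lra.
Qed.

Lemma density_fQ (R : realType) Q : (0 < Q)%N ->
  has_fpractical_density (fQ Q) (1 - (totient Q)%:R / Q%:R : R).
Proof.
move=> Q0; rewrite /has_fpractical_density; apply/cvgrPdist_le => eps eps0.
set B : R := (Q + 2)%:R.
set d : R := 1 - (totient Q)%:R / Q%:R.
near=> N.
have hN : B / eps < N%:R by near: N; exact: nbhs_infty_gtr.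
have B0 : 0 <= B by [].
have N0 : 0 < N%:R :> R by apply: le_lt_trans hN; rewrite divr_ge0 // ltW.
have := count_bound R N Q0; rewrite -/d => hb.
have -> : d - (count_fpractical (fQ Q) N)%:R / N%:R
          = - (((count_fpractical (fQ Q) N)%:R - N%:R * d) / N%:R).
  by field; rewrite gt_eqF.
rewrite normrN normrM normfV (gtr0_norm N0) ler_pdivrMr //.
apply: le_trans hb _.
by rewrite mulrC -ler_pdivrMr // ltW.
Unshelve. all: by end_near.
Qed.

Section C2.
Variable R : realType.

Definition prodR (s : seq nat) : R := \prod_(p <- s) (1 - p%:R^-1).
Definition H (M : nat) : R := \sum_(s < M) (s.+1%:R)^-1.

Lemma prl_uniq a b : uniq (prl a b).
Proof. by rewrite filter_uniq // iota_uniq. Qed.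

Lemma prl_cat a b c : prl a (b + c) = prl a b ++ prl (a + b) c.
Proof. by rewrite /prl iotaD filter_cat. Qed.

Lemma prl1 a : prl a 1 = if prime a then [:: a] else [::].
Proof. by rewrite /prl /=; case: prime. Qed.

Lemma totient_prod (s : seq nat) : all prime s -> uniq s ->
  totient (\prod_(p <- s) p) = (\prod_(p <- s) p.-1)%N.
Proof.
elim: s => [|a s IH] /=; first by rewrite !big_nil.
case/andP => pa ps /andP [as_ us]; rewrite !big_cons totient_coprime; first by rewrite (totient_prime pa) IH.
elim: s as_ ps {IH us} => [|b s IH]; first by rewrite big_nil coprimen1.
rewrite inE negb_or big_cons => /andP [ab nas] /= /andP [pb ps].
by rewrite coprimeMr IH // andbT prime_coprime // dvdn_prime2.
Qed.

Lemma ratio_prod (s : seq nat) : all prime s -> uniq s ->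
  (totient (\prod_(p <- s) p))%:R / (\prod_(p <- s) p)%:R = prodR s.
Proof.
move=> ps us; rewrite totient_prod // /prodR.
elim: s ps us => [|a s IH] /=; first by rewrite !big_nil divr1.
case/andP => pa ps /andP [_ us]; rewrite !big_cons !natrM -IH //.
have a0 : (a%:R : R) != 0 by rewrite pnatr_eq0 -lt0n prime_gt0.
have P0 : ((\prod_(p <- s) p)%N%:R : R) != 0.
  by rewrite pnatr_eq0 -lt0n prod_primes_gt0.
have -> : (a.-1%:R : R) = a%:R - 1 by rewrite -[in RHS](prednK (prime_gt0 pa)) -addn1 natrD addrK.
by field; apply/andP.
Qed.

Lemma factor_ge0 p : prime p -> 0 <= 1 - p%:R^-1 :> R.
Proof.
move=> pp; rewrite subr_ge0 invf_le1 ?ltr0n ?prime_gt0 // ler1n prime_gt0 //.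
Qed.

Lemma factor_le1 p : 1 - p%:R^-1 <= 1 :> R.
Proof. by rewrite lerBlDr lerDl invr_ge0. Qed.

Lemma prodR_ge0 s : all prime s -> 0 <= prodR s.
Proof.
elim: s => [|a s IH] /=; first by rewrite /prodR big_nil.
by case/andP => pa ps; rewrite /prodR big_cons mulr_ge0 ?factor_ge0 ?IH.
Qed.

Lemma prodR_le1 s : all prime s -> prodR s <= 1.
Proof.
elim: s => [|a s IH] /=; first by rewrite /prodR big_nil.
case/andP => pa ps; rewrite /prodR big_cons.
by rewrite mulr_ile1 ?factor_ge0 ?factor_le1 ?prodR_ge0 ?IH.
Qed.

Lemma prodR_cat s1 s2 : prodR (s1 ++ s2) = prodR s1 * prodR s2.
Proof. by rewrite /prodR big_cat. Qed.

Lemma PH M : (1 < M)%N -> prodR (prl 1 M) * H M <= 1.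
Proof.
move=> M1; have := count_main M1; rewrite -(ler_nat R) natr_sum natrM.
set Q := Qp 1 M; set L := M`!.
have Q0 : (Q%:R : R) != 0 by rewrite pnatr_eq0 -lt0n Qp_gt0.
have L0 : 0 < (L%:R : R) by rewrite ltr0n fact_gt0.
have -> : prodR (prl 1 M) = (totient Q)%:R / Q%:R.
  by rewrite ratio_prod ?prl_prime ?prl_uniq.
move=> h; move: h; under eq_bigr do rewrite natrM; move=> h.
have -> : (totient Q)%:R / Q%:R * H M =
    (\sum_(i < M) (L %/ i.+1)%:R * (totient Q)%:R) / (L%:R * Q%:R).
  rewrite /H mulr_sumr mulr_suml; apply: eq_bigr => i _.
  rewrite natf_div ?dvdn_fact ?ltn0Sn ?ltn_ord //.
  field; rewrite Q0 (gt_eqF L0) /= gt_eqF //; have : 0 <= i%:R :> R by []; lra.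
rewrite ler_pdivrMr ?mul1r //.
  by rewrite mulr_gt0 // lt0r Q0 /=.
Qed.

End C2.

Section C3.
Variable R : realType.

Lemma H_ge0 M : 0 <= H R M.
Proof. by rewrite /H sumr_ge0 // => i _; rewrite invr_ge0. Qed.

Lemma Hpow j : j%:R / 2 <= H R (2 ^ j).
Proof.
elim: j => [|j IH]; first by rewrite mul0r H_ge0.
rewrite expnS mul2n -addnn /H big_split_ord /=.
set m := (2 ^ j)%N.
have m0 : (0 < m)%N by rewrite expn_gt0.
have hb : \sum_(i < m) (((m + i).+1)%:R : R)^-1 >= \sum_(i < m) (((m + m)%:R : R))^-1.
  apply: ler_sum => i _; rewrite lef_pV2 ?posrE ?ltr0n ?addn_gt0 ?m0 //.
  by rewrite ler_nat -addnS leq_add2l ltn_ord.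
have hc : \sum_(i < m) (((m + m)%:R : R))^-1 = 1 / 2.
  rewrite sumr_const card_ord -[_ *+ m]mulr_natr natrD.
  have : (m%:R : R) != 0 by rewrite pnatr_eq0 -lt0n.
  by move=> mn0; field; rewrite -natrD pnatr_eq0 addn_eq0; move: m0; rewrite lt0n => /negbTE ->.
rewrite hc in hb.
have : j%:R / 2 <= \sum_(i < m) (i.+1%:R : R)^-1 by exact: IH.
move=> IH2; rewrite -natr1 mulrDl; exact: lerD IH2 hb.
Qed.

Lemma P_ge K : (0 < K)%N -> K%:R^-1 <= prodR R (prl 1 K).
Proof.
case: K => // k _; elim: k => [|k IH].
  by rewrite /prl /= /prodR big_nil invr1.
rewrite -addn1 prl_cat prl1 prodR_cat add1n.
have a0 : 0 < (k.+1%:R : R) by rewrite ltr0n.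
have lt : (k.+1 + 1)%:R^-1 <= (k.+1%:R : R)^-1.
  by rewrite lef_pV2 ?posrE ?ltr0n ?addn_gt0 // ler_nat addn1.
case: prime.
  rewrite /prodR big_seq1 -/(prodR R _).
  have -> : 1 - (k.+2)%:R^-1 = (k.+1%:R : R) / (k.+1 + 1)%:R.
    have k2 : (k.+2%:R : R) = k.+1%:R + 1 by rewrite -natr1.
    rewrite addn1 k2; field.
    by apply/eqP => h; have : 0 <= k%:R :> R by []; lra.
  apply: le_trans (_ : k.+1%:R^-1 * (k.+1%:R / (k.+1 + 1)%:R) <= _).
    by rewrite mulrA mulVf ?mul1r // gt_eqF.
  by rewrite ler_wpM2r // divr_ge0.
by rewrite /prodR big_nil mulr1; exact: le_trans lt IH.
Qed.

Lemma P_gt0 K : (0 < K)%N -> 0 < prodR R (prl 1 K).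
Proof. by move=> K0; apply: lt_le_trans (P_ge K0); rewrite invr_gt0 ltr0n. Qed.

Lemma tail K z : (0 < K)%N -> 0 < z -> exists i, prodR R (prl K.+1 i) < z.
Proof.
move=> K0 z0.
set j := (Num.Def.archi_bound (2 * K%:R / z) + K + 2)%N.
set M := (2 ^ j)%N.
have jM : (j < M)%N by rewrite ltn_expl.
have KM : (K <= M)%N by apply: leq_trans (ltnW jM); rewrite /j; lia.
exists (M - K)%N.
have ME : prl 1 M = prl 1 K ++ prl K.+1 (M - K).
  by rewrite -prl_cat subnKC.
have PMdef : prodR R (prl 1 M) = prodR R (prl 1 K) * prodR R (prl K.+1 (M - K)).
  by rewrite ME prodR_cat.
have M1 : (1 < M)%N by apply: leq_ltn_trans jM; rewrite /j addn2.
have hPH := PH R M1.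
have hH : 2 * K%:R / z < j%:R.
  apply: lt_le_trans (archi_boundP _) _; first by rewrite divr_ge0 ?mulr_ge0 // ltW.
  by rewrite ler_nat /j; lia.
have hH2 : K%:R / z < H R M.
  apply: lt_le_trans (Hpow j).
  move: hH; rewrite -mulrA; set a := K%:R / z; lra.
have PM0 := P_gt0 (ltnW M1).
have h1 : prodR R (prl 1 M) * (K%:R / z) < 1.
  by apply: lt_le_trans hPH; rewrite ltr_pM2l.
have h2 : prodR R (prl 1 M) * K%:R < z.
  by move: h1; rewrite mulrA ltr_pdivrMr // mul1r.
have hK := P_ge K0.
have u0 : 0 <= prodR R (prl K.+1 (M - K)) by apply: prodR_ge0; exact: prl_prime.
apply: le_lt_trans h2.
rewrite PMdef mulrC mulrA.
have Ka : 1 <= K%:R * prodR R (prl 1 K).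
  have kpos : 0 < K%:R :> R by rewrite ltr0n.
  by have := ler_wpM2l (ltW kpos) hK; rewrite mulfV ?gt_eqF.
by rewrite -{1}(mul1r (prodR R (prl K.+1 (M - K)))) ler_wpM2r.
Qed.

Lemma dIVT (u : nat -> R) y e n : y <= u 0%N -> u n < y ->
  (forall i, u i - u i.+1 < e) -> exists i, `|u i - y| < e.
Proof.
move=> h0 hn hs; elim: n hn => [|n IH] hn; first by move: hn; rewrite ltNge h0.
case: (ltrP (u n) y) => h; first exact: IH.
exists n.+1; have := hs n; rewrite ltr_norml; move=> hh; apply/andP; split; lra.
Qed.

End C3.

Unset Implicit Arguments.

Theorem theorem1p7 (R : realType) (x : R) (hx0 : 0 <= x) (hx1 : x <= 1)
    (e : R) (he : 0 < e) :
  exists f : nat -> nat, in_classF f /\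
    exists delta : R, `|delta - x| < e /\ has_fpractical_density f delta.
Proof.
set K := (Num.Def.archi_bound e^-1).+1.
have K0 : (0 < K)%N by [].
have hb : e^-1 < (Num.Def.archi_bound e^-1)%:R by apply: archi_boundP; rewrite invr_ge0 ltW.
have Ke : forall i, ((K + i)%:R : R)^-1 < e.
  move=> i; rewrite invf_plt ?posrE ?ltr0n ?addn_gt0 ?K0 //.
  apply: lt_le_trans hb _; rewrite ler_nat /K; lia.
set u := fun i => prodR R (prl K.+1 i).
have u0 : forall i, 0 <= u i by move=> i; apply: prodR_ge0; exact: prl_prime.
have u1 : forall i, u i <= 1 by move=> i; apply: prodR_le1; exact: prl_prime.
have step : forall i, u i - u i.+1 < e.
  move=> i; rewrite /u -[i.+1]addn1 prl_cat prodR_cat prl1.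
  case: (prime (K.+1 + i)).
    rewrite /prodR big_seq1 -/(prodR R _).
    set a := prodR R _; set p := (K.+1 + i)%N.
    have hp : (p%:R : R)^-1 < e by rewrite /p addSnnS; exact: Ke.
    have ha0 : 0 <= a by exact: u0.
    have ha1 : a <= 1 by exact: u1.
    have hp0 : 0 <= (p%:R : R)^-1 by rewrite invr_ge0.
    have -> : a - a * (1 - p%:R^-1) = a * p%:R^-1 by ring.
    apply: le_lt_trans hp; rewrite ler_piMl //.
  by rewrite /prodR big_nil mulr1 subrr.
have [i hi] : exists i, `|u i - (1 - x)| < e.
  case: (ltrP (1 - x) e) => hy.
    have [i hi] := tail (R:=R) K0 he; exists i.
    have := u0 i; rewrite /u in hi *; move=> hu0.
    rewrite ltr_norml; apply/andP; split; lra.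
  have y0 : 0 < 1 - x by apply: lt_le_trans hy.
  have [n hn] := tail (R:=R) K0 y0.
  apply: (@dIVT R u (1 - x) e n) => //.
  by rewrite /u /prodR /prl /= big_nil; lra.
set Q := Qp K.+1 i.
exists (fQ Q); split; first exact: fQ_classF.
exists (1 - (totient Q)%:R / Q%:R); split; last exact: density_fQ (Qp_gt0 _ _).
rewrite /Q /Qp ratio_prod ?prl_prime ?prl_uniq // -/(u i).
have -> : 1 - u i - x = - (u i - (1 - x)) by ring.
by rewrite normrN.
Qed.
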